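(* In the category $P_2$, let $f:A\to X$ and $g:B\to X$ be arrows. Let $Y=\{(a,b)\in A\times B : f(a)=g(b)\}$, with the structure inherited from the product geometry $A\times B$ (identity $(e_A,e_B)$ and triple set $\Delta_{A\times B}\cap(Y\times Y\times Y)$), and let $\alpha:Y\to A$, $\alpha(a,b)=a$, and $\beta:Y\to B$, $\beta(a,b)=b$. Then $Y$ is an object of $P_2$, $\alpha,\beta$ are arrows of $P_2$ with $f\circ\alpha=g\circ\beta$, and this square is a pullback in $P_2$: for every object $Z$ and arrows $f':Z\to A$, $g':Z\to B$ of $P_2$ with $f\circ f'=g\circ g'$, there is a unique arrow $\varepsilon:Z\to Y$ of $P_2$ with $\alpha\circ\varepsilon=f'$ and $\beta\circ\varepsilon=g'$, namely $\varepsilon(x)=(f'(x),g'(x))$.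
   Context: A Pasch geometry is a triple $(A,e,\Delta_A)$ with $A$ a set, $e\in A$, $\Delta_A\subseteq A\times A\times A$, such that: (1) for each $a\in A$ there is a unique $b\in A$ with $(a,b,e)\in\Delta_A$, denoted $a^\#$; (2) $e^\#=e$ and $(a^\#)^\#=a$ for all $a$; (3) $(a,b,c)\in\Delta_A$ implies $(b,c,a)\in\Delta_A$; (4) if $(a_1,a_2,a_3),(a_1,a_4,a_5)\in\Delta_A$ then there is $a_6\in A$ with $(a_6,a_4^\#,a_2)\in\Delta_A$ and $(a_6,a_5,a_3^\#)\in\Delta_A$. A geometry is sharp if for all $a,b\in A$ there is at most one $c\in A$ with $(a,b,c)\in\Delta_A$. The product geometry $A\times B$ has identity $(e_A,e_B)$ and $\Delta_{A\times B}=\{((a_1,b_1),(a_2,b_2),(a_3,b_3)) : (a_1,a_2,a_3)\in\Delta_A,(b_1,b_2,b_3)\in\Delta_B\}$. A geometry morphism $f:A\to B$ is a map with $f(e_A)=e_B$ and $(x,y,z)\in\Delta_A\Rightarrow(f(x),f(y),f(z))\in\Delta_B$. A geometry homomorphism is a morphism $f$ such that whenever $(f(x),f(y),b)\in\Delta_B$ there exists $z\in A$ with $b=f(z)$ and $(x,y,z)\in\Delta_A$. $P_2$ is the category whose objects are sharp Pasch geometries and whose arrows are geometry homomorphisms, with composition of maps. *)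

(* Defs.v *)
From Stdlib Require Import ssreflect.

(* (a,b,c) ∈ Δ is written D a b c *)
Definition is_pasch_geometry {A : Type} (e : A) (D : A -> A -> A -> Prop) : Prop :=
  (* (1) for each a there is a unique b with (a,b,e) ∈ Δ  (this b is a^#) *)
  (forall a : A, exists! b : A, D a b e) /\
  (* (2) e^# = e, i.e. (e,e,e) ∈ Δ *)
  D e e e /\
  (* (2) (a^#)^# = a, i.e. (a,b,e) ∈ Δ implies (b,a,e) ∈ Δ *)
  (forall a b : A, D a b e -> D b a e) /\
  (forall a b c : A, D a b c -> D b c a) /\
  (* (4) Pasch axiom; a4^# and a3^# are expressed through witnesses *)
  (forall a1 a2 a3 a4 a5 : A, D a1 a2 a3 -> D a1 a4 a5 ->
     forall a4s a3s : A, D a4 a4s e -> D a3 a3s e ->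
     exists a6 : A, D a6 a4s a2 /\ D a6 a5 a3s).

Definition is_sharp {A : Type} (D : A -> A -> A -> Prop) : Prop :=
  forall a b c c' : A, D a b c -> D a b c' -> c = c'.

Record SPG := {
  carrier :> Type;
  unit_el : carrier;
  Delta : carrier -> carrier -> carrier -> Prop;
  spg_pasch : @is_pasch_geometry carrier unit_el Delta;
  spg_sharp : @is_sharp carrier Delta
}.

Definition is_geom_morphism {A : Type} (eA : A) (DA : A -> A -> A -> Prop)
  {B : Type} (eB : B) (DB : B -> B -> B -> Prop) (f : A -> B) : Prop :=
  f eA = eB /\ (forall x y z : A, DA x y z -> DB (f x) (f y) (f z)).

Definition is_geom_hom {A : Type} (eA : A) (DA : A -> A -> A -> Prop)
  {B : Type} (eB : B) (DB : B -> B -> B -> Prop) (f : A -> B) : Prop :=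
  is_geom_morphism eA DA eB DB f /\
  (forall (x y : A) (b : B), DB (f x) (f y) b ->
     exists z : A, b = f z /\ DA x y z).

Definition P2_arrow {A B : SPG} (f : A -> B) : Prop :=
  is_geom_hom (unit_el A) (@Delta A) (unit_el B) (@Delta B) f.

Definition PB {A B X : SPG} (f : A -> X) (g : B -> X) : Type :=
  { p : A * B | f (fst p) = g (snd p) }.

Definition PB_e {A B X : SPG} (f : A -> X) (g : B -> X)
  (hf : P2_arrow f) (hg : P2_arrow g) : PB f g.
Proof.
  exists (unit_el A, unit_el B). simpl.
  destruct hf as [[-> _] _]. destruct hg as [[-> _] _]. reflexivity.
Defined.

Definition PB_Delta {A B X : SPG} (f : A -> X) (g : B -> X)
  (p q r : PB f g) : Prop :=
  @Delta A (fst (proj1_sig p)) (fst (proj1_sig q)) (fst (proj1_sig r)) /\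
  @Delta B (snd (proj1_sig p)) (snd (proj1_sig q)) (snd (proj1_sig r)).

Definition PB_alpha {A B X : SPG} (f : A -> X) (g : B -> X) (p : PB f g) : A :=
  fst (proj1_sig p).
Definition PB_beta {A B X : SPG} (f : A -> X) (g : B -> X) (p : PB f g) : B :=
  snd (proj1_sig p).

(* Main.v *)
Require Import Defs.
From Stdlib Require Import ssreflect.
From Stdlib Require Import ProofIrrelevance.

Lemma PB_eq {A B X : SPG} (f : A -> X) (g : B -> X) (p q : PB f g) :
  proj1_sig p = proj1_sig q -> p = q.
Proof.
  destruct p as [p hp], q as [q hq]; simpl; intros E; subst q.
  f_equal; apply proof_irrelevance.
Qed.

Theorem theorem3p8 (A B X : SPG) (f : A -> X) (g : B -> X)
  (hf : P2_arrow f) (hg : P2_arrow g) :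
  let Y := PB f g in
  let eY := PB_e f g hf hg in
  let DY := PB_Delta f g in
  (* Y is an object of P_2 *)
  (is_pasch_geometry eY DY /\ is_sharp DY) /\
  (* alpha, beta are arrows of P_2 *)
  is_geom_hom eY DY (unit_el A) (@Delta A) (PB_alpha f g) /\
  is_geom_hom eY DY (unit_el B) (@Delta B) (PB_beta f g) /\
  (* the square commutes *)
  (forall y : Y, f (PB_alpha f g y) = g (PB_beta f g y)) /\
  (* universal property *)
  (forall (Z : SPG) (f' : Z -> A) (g' : Z -> B),
     P2_arrow f' -> P2_arrow g' ->
     (forall z : Z, f (f' z) = g (g' z)) ->
     exists eps : Z -> Y,
       is_geom_hom (unit_el Z) (@Delta Z) eY DY eps /\
       (forall z : Z, PB_alpha f g (eps z) = f' z) /\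
       (forall z : Z, PB_beta f g (eps z) = g' z) /\
       (forall z : Z, proj1_sig (eps z) = (f' z, g' z)) /\
       (forall eps' : Z -> Y,
          is_geom_hom (unit_el Z) (@Delta Z) eY DY eps' ->
          (forall z : Z, PB_alpha f g (eps' z) = f' z) ->
          (forall z : Z, PB_beta f g (eps' z) = g' z) ->
          forall z : Z, eps' z = eps z)).
Proof.
  intros Y eY DY.
  assert (HeY : proj1_sig eY = (unit_el A, unit_el B)) by reflexivity.
  pose proof (spg_pasch A) as [A1 [A2 [A3 [A4 A5]]]].
  pose proof (spg_pasch B) as [B1 [B2 [B3 [B4 B5]]]].
  pose proof (spg_sharp X) as SX.
  pose proof (spg_sharp A) as SA.
  pose proof (spg_sharp B) as SB.
  pose proof hf as [[fe fm] fl].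
  pose proof hg as [[ge gm] gl].
  split; [split; [split; [|split; [|split; [|split]]] |] | split; [|split; [|split]]].
  -
    intros [[a b] hab].
    destruct (A1 a) as [a' [Ha' Ua]].
    destruct (B1 b) as [b' [Hb' Ub]].
    assert (E : f a' = g b').
    { simpl in hab. apply (SX (unit_el X) (f a)).
      - rewrite -{1}fe. apply fm, A4, A4; exact Ha'.
      - rewrite hab -ge. apply gm, B4, B4; exact Hb'. }
    exists (exist _ (a', b') E). split.
    + unfold DY, PB_Delta; rewrite HeY; simpl; split; assumption.
    + intros y' [H1 H2]. apply PB_eq. rewrite HeY in H1 H2. simpl in *.
      destruct y' as [[c d] hcd]; simpl in *.
      rewrite (Ua c H1) (Ub d H2). reflexivity.
  - unfold DY, PB_Delta; rewrite HeY; simpl; split; assumption.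
  - intros a b [H1 H2]; unfold DY, PB_Delta in *; rewrite HeY in H1 H2 |- *; simpl in *; split; auto.
  - intros a b c [H1 H2]; split; auto.
  - intros [[a1 b1] h1] [[a2 b2] h2] [[a3 b3] h3] [[a4 b4] h4] [[a5 b5] h5]
      [H1 H1'] [H2 H2'] [[a4s b4s] h4s] [[a3s b3s] h3s] [H3 H3'] [H4 H4'].
    unfold DY, PB_Delta in *; simpl in *.
    destruct (A5 _ _ _ _ _ H1 H2 _ _ H3 H4) as [a6 [K1 K2]].
    destruct (B5 _ _ _ _ _ H1' H2' _ _ H3' H4') as [b6 [L1 L2]].
    assert (E : f a6 = g b6).
    { apply (SX (f a4s) (f a2)).
      - apply fm, A4; exact K1.
      - rewrite h4s h2. apply gm, B4; exact L1. }
    exists (exist _ (a6, b6) E); simpl; split; split; assumption.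
  - intros a b c c' [H1 H2] [H3 H4]. apply PB_eq.
    destruct a as [[a1 b1] ?], b as [[a2 b2] ?], c as [[a3 b3] ?], c' as [[a4 b4] ?].
    simpl in *. rewrite (SA _ _ _ _ H1 H3) (SB _ _ _ _ H2 H4). reflexivity.
  - unfold is_geom_hom, is_geom_morphism; split; [split|].
    + reflexivity.
    + intros x y z [H _]; exact H.
    + intros [[ax bx] hx] [[ay by_] hy] c H. unfold PB_alpha in H; simpl in *.
      assert (HX : Delta X (g bx) (g by_) (f c)).
      { rewrite -hx -hy. apply fm; exact H. }
      destruct (gl _ _ _ HX) as [d [Ed Hd]].
      exists (exist _ (c, d) Ed). split; [reflexivity|]. split; assumption.
  - unfold is_geom_hom, is_geom_morphism; split; [split|].
    + reflexivity.
    + intros x y z [_ H]; exact H.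
    + intros [[ax bx] hx] [[ay by_] hy] d H. unfold PB_beta in H; simpl in *.
      assert (HX : Delta X (f ax) (f ay) (g d)).
      { rewrite hx hy. apply gm; exact H. }
      destruct (fl _ _ _ HX) as [c [Ec Hc]].
      exists (exist _ (c, d) (eq_sym Ec)). split; [reflexivity|]. split; assumption.
  - intros [[a b] h]; exact h.
  - intros Z f' g' hf' hg' hc.
    pose proof hf' as [[f'e f'm] f'l].
    pose proof hg' as [[g'e g'm] g'l].
    pose proof (spg_sharp Z) as SZ.
    exists (fun z => exist _ (f' z, g' z) (hc z)).
    split; [split; [split|] | split; [|split; [|split]]].
    + apply PB_eq. rewrite HeY; simpl. rewrite f'e g'e. reflexivity.
    + intros x y z H; split; simpl; auto.
    + intros x y [[a b] hab] [H1 H2]; simpl in *.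
      destruct (f'l _ _ _ H1) as [z1 [E1 K1]].
      destruct (g'l _ _ _ H2) as [z2 [E2 K2]].
      rewrite (SZ _ _ _ _ K2 K1) in E2.
      exists z1. split; [|exact K1]. apply PB_eq; simpl. subst. reflexivity.
    + reflexivity.
    + reflexivity.
    + reflexivity.
    + intros eps' _ Ha Hb z. apply PB_eq; simpl.
      rewrite -(Ha z) -(Hb z). unfold PB_alpha, PB_beta.
      destruct (proj1_sig (eps' z)); reflexivity.
Qed.
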